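(* Let $F$ be a finite field of characteristic $2$, let $n\ge 1$, and let $R$ be an even integer. Then there is a finite set of homogeneous polynomials of degree $R+1$ in the coefficients $a_{ij}$ ($1\le i\le j\le n$), with coefficients in $F$, such that for every quadratic form $Q(x_1,\ldots,x_n)=\sum_{1\le i\le j\le n}a_{ij}x_ix_j$ over $F$, these polynomials all vanish at $(a_{ij})$ if and only if $\mathrm{Rank}(Q)\le R$.
   Context: The rank of a quadratic form $Q$ over a field $F$ is the minimal integer $m$ such that there exist a quadratic form $Q'$ over $F$ in $m$ variables and linear forms $L_1,\ldots,L_m$ over $F$ with $Q(x_1,\ldots,x_n)=Q'(L_1,\ldots,L_m)$. *)

(* Defs.v *)
From HB Require Import structures.
From mathcomp Require Import all_boot all_order all_algebra.
Set Implicit Arguments. Unset Strict Implicit. Unset Printing Implicit Defensive.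
Import Order.TTheory GRing.Theory.
Local Open Scope ring_scope.

(* Index set of the coefficients a_ij, 1 <= i <= j <= n (0-based here). *)
Definition qvar (n : nat) := {p : 'I_n * 'I_n | (p.1 <= p.2)%N}.

(* Coefficient of the monomial x_i x_j (i <= j) in the polynomial x^T M x. *)
Definition qf_coef (F : pzRingType) (n : nat) (M : 'M[F]_n) (i j : 'I_n) : F :=
  if i == j then M i i else M i j + M j i.

(* The quadratic form Q = sum_{i<=j} a_ij x_i x_j (given by a) is, as a
   polynomial, equal to Q'(L_1,...,L_m), where Q'(y) = y^T B y is an arbitrary
   quadratic form in m variables and L = C x are m linear forms. *)
Definition qf_repr (F : finNzRingType) (n : nat) (a : qvar n -> F) (m : nat) : bool :=
  [exists B : 'M[F]_m, exists C : 'M[F]_(m, n),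
     [forall v : qvar n, qf_coef (C^T *m B *m C) (sval v).1 (sval v).2 == a v]].

Lemma qf_repr_n (F : finNzRingType) (n : nat) (a : qvar n -> F) :
  exists m, qf_repr a m.
Proof.
exists n; apply/existsP.
pose B : 'M[F]_n := \matrix_(i, j) (if insub (i, j) is Some v then a v else 0).
exists B; apply/existsP; exists 1%:M; apply/forallP => v.
rewrite trmx1 mul1mx mulmx1 /qf_coef /B !mxE.
case: v => [[i j] /= hij].
have Hs : forall (k l : 'I_n) (h : (k <= l)%N), insub (k, l) = Some (exist _ (k, l) h : qvar n).
  by move=> k l h; rewrite insubT /=; congr Some; apply: val_inj.
case: (eqVneq i j) => [eij|neij].
  by subst j; rewrite (Hs _ _ hij).
rewrite (Hs _ _ hij) insubF ?addr0 //=.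
by apply/negbTE; rewrite -ltnNge ltn_neqAle hij andbT.
Qed.

Definition qf_rank (F : finNzRingType) (n : nat) (a : qvar n -> F) : nat :=
  ex_minn (qf_repr_n a).

(* Homogeneous polynomials of degree d in the variables indexed by V, with
   coefficients in F: a coefficient for each exponent vector e : V -> nat
   (exponents are < d.+1), nonzero only on monomials of total degree d. *)
Record hpoly (F : pzRingType) (V : finType) (d : nat) := HPoly {
  hcoef : {ffun {ffun V -> 'I_d.+1} -> F};
  hcoef_homog : forall e, hcoef e != 0 -> (\sum_(v : V) (e v : nat))%N = d
}.

Definition heval (F : comRingType) (V : finType) (d : nat)
    (p : hpoly F V d) (x : V -> F) : F :=
  \sum_(e : {ffun V -> 'I_d.+1}) hcoef p e * \prod_(v : V) x v ^+ (e v : nat).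

(* Main.v *)
Require Import Defs.
From Stdlib Require List.
From HB Require Import structures.
From mathcomp Require Import all_boot all_order all_algebra all_field.
From mathcomp Require Import perm.
Import GRing.Theory.
Set Implicit Arguments. Unset Strict Implicit. Unset Printing Implicit Defensive.
Local Open Scope ring_scope.


Definition IsH (F : comRingType) (V : finType) d (f : (V -> F) -> F) :=
  exists p : hpoly F V d, forall a, heval p a = f a.

Lemma IsH0 (F : comRingType) (V : finType) d : IsH d (fun _ : V -> F => 0).
Proof.
have h : forall e, ([ffun _ => 0] : {ffun {ffun V -> 'I_d.+1} -> F}) e != 0 ->
   (\sum_(v : V) (e v : nat))%N = d by move=> e; rewrite ffunE eqxx.
by exists (HPoly h) => a; rewrite /heval big1 // => e _; rewrite /= ffunE mul0r.
Qed.

Lemma IsHD (F : comRingType) (V : finType) d (f g : (V -> F) -> F) :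
  IsH d f -> IsH d g -> IsH d (fun a => f a + g a).
Proof.
case=> p hp [q hq].
have h : forall e, ([ffun e => hcoef p e + hcoef q e]
     : {ffun {ffun V -> 'I_d.+1} -> F}) e != 0 -> (\sum_(v : V) (e v : nat))%N = d.
  move=> e; rewrite ffunE; case: (eqVneq (hcoef p e) 0) => [->|/hcoef_homog//].
  by rewrite add0r; exact: hcoef_homog.
exists (HPoly h) => a; rewrite /heval -hp -hq -big_split /=.
by apply: eq_bigr => e _; rewrite ffunE mulrDl.
Qed.

Lemma IsHZ (F : comRingType) (V : finType) d (c : F) (f : (V -> F) -> F) :
  IsH d f -> IsH d (fun a => c * f a).
Proof.
case=> p hp.
have h : forall e, ([ffun e => c * hcoef p e]
     : {ffun {ffun V -> 'I_d.+1} -> F}) e != 0 -> (\sum_(v : V) (e v : nat))%N = d.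
  move=> e; rewrite ffunE; case: (eqVneq (hcoef p e) 0) => [->|/hcoef_homog//].
  by rewrite mulr0 eqxx.
exists (HPoly h) => a; rewrite /heval -hp mulr_sumr /=.
by apply: eq_bigr => e _; rewrite ffunE mulrA.
Qed.

Lemma IsH_ext (F : comRingType) (V : finType) d (f g : (V -> F) -> F) :
  (forall a, f a = g a) -> IsH d f -> IsH d g.
Proof. by move=> fg [p hp]; exists p => a; rewrite hp fg. Qed.

Lemma IsH_sum (F : comRingType) (V : finType) d (I : Type) (r : seq I) (P : pred I)
   (G : I -> (V -> F) -> F) :
  (forall i, P i -> IsH d (G i)) -> IsH d (fun a => \sum_(i <- r | P i) G i a).
Proof.
move=> hG; elim: r => [|x r IH].
  by apply: IsH_ext (IsH0 _ _ _) => a; rewrite big_nil.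
case Px: (P x).
  apply: IsH_ext (IsHD (hG x Px) IH) => a; by rewrite big_cons Px.
by apply: IsH_ext IH => a; rewrite big_cons Px.
Qed.

Definition exps (V : finType) d (phi : {ffun 'I_d -> V}) : {ffun V -> 'I_d.+1} :=
  [ffun v => inord #|[pred k | phi k == v]|].

Lemma expsE (V : finType) d (phi : {ffun 'I_d -> V}) v :
  (exps phi v : nat) = #|[pred k | phi k == v]|.
Proof.
rewrite ffunE inordK // ltnS.
by apply: leq_trans (max_card _) _; rewrite card_ord.
Qed.

Lemma exps_sum (V : finType) d (phi : {ffun 'I_d -> V}) :
  (\sum_(v : V) (exps phi v : nat))%N = d.
Proof.
have e1 : (\sum_(k : 'I_d) 1)%N = d by rewrite sum1_card card_ord.
rewrite -[in RHS]e1 (partition_big phi predT) //=; apply: eq_bigr => v _.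
by rewrite expsE sum1_card.
Qed.

Lemma IsH_prod (F : comRingType) (V : finType) d (c : 'I_d -> V -> F) :
  IsH d (fun a => \prod_(k < d) \sum_(v : V) c k v * a v).
Proof.
pose hc := [ffun e : {ffun V -> 'I_d.+1} =>
   \sum_(phi : {ffun 'I_d -> V} | exps phi == e) \prod_k c k (phi k)].
have h : forall e, hc e != 0 -> (\sum_(v : V) (e v : nat))%N = d.
  move=> e; rewrite ffunE.
  case: (pickP (fun phi : {ffun 'I_d -> V} => exps phi == e)) => [phi /eqP <-|none].
    by rewrite exps_sum.
  by rewrite (big_pred0 _ _ _ _ none) eqxx.
exists (HPoly h) => a; rewrite /heval /= bigA_distr_bigA /=.
rewrite (partition_big (@exps V d) predT) //=; apply: eq_bigr => e _.
rewrite ffunE mulr_suml; apply: eq_bigr => phi /eqP <-.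
rewrite big_split /=; congr (_ * _).
rewrite (partition_big phi predT) //=; apply: eq_bigr => v _.
rewrite expsE -prodr_const; apply: eq_bigr => k /eqP ->; done.
Qed.

Definition dlt (V : finType) (F : pzRingType) (v : V) : V -> F := fun w => (w == v)%:R.

Definition islin (F : comRingType) (V : finType) (f : (V -> F) -> F) :=
  forall a, f a = \sum_(v : V) f (dlt F v) * a v.

Lemma IsH_prodlin (F : comRingType) (V : finType) d (f : 'I_d -> (V -> F) -> F) :
  (forall k, islin (f k)) -> IsH d (fun a => \prod_(k < d) f k a).
Proof.
move=> hf; apply: IsH_ext (IsH_prod (fun k v => f k (dlt F v))) => a.
by apply: eq_bigr => k _; rewrite -hf.
Qed.


Definition qv (F : comRingType) p (M : 'M[F]_p) (u : 'rV[F]_p) : F :=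
  (u *m M *m u^T) 0 0.
Definition pol (F : comRingType) p (M : 'M[F]_p) (u w : 'rV[F]_p) : F :=
  (u *m (M + M^T) *m w^T) 0 0.

Lemma trsc (F : comRingType) p q (x : 'rV[F]_p) (M : 'M[F]_(p, q)) (y : 'rV[F]_q) :
  (x *m M *m y^T) 0 0 = (y *m M^T *m x^T) 0 0.
Proof.
transitivity ((x *m M *m y^T)^T 0 0); first by rewrite [in RHS]mxE.
by rewrite !trmx_mul trmxK mulmxA.
Qed.

Lemma eD (F : comRingType) p q (A B : 'M[F]_(p, q)) i j : (A + B) i j = A i j + B i j.
Proof. by rewrite mxE. Qed.

Lemma swap4 (V : zmodType) (a b c d : V) : a + b + (c + d) = a + d + (c + b).
Proof. by rewrite -!addrA; congr (_ + _); rewrite addrC (addrC c d) -addrA. Qed.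

Lemma sub3 (V : zmodType) (a b c : V) : a + b + c - a - b = c.
Proof. by apply/eqP; rewrite !subr_eq [X in _ == X]addrC (addrC c b) addrA. Qed.

Lemma qvD (F : comRingType) p (M : 'M[F]_p) x y :
  qv M (x + y) = qv M x + qv M y + pol M x y.
Proof.
rewrite /qv /pol linearD /= !(mulmxDl, mulmxDr) !eD.
rewrite [(y *m M *m x^T) 0 0]trsc.
exact: swap4.
Qed.

Lemma qvZ (F : comRingType) p (M : 'M[F]_p) c x :
  qv M (c *: x) = c ^+ 2 * qv M x.
Proof. by rewrite /qv linearZ /= -!scalemxAl -scalemxAr !mxE mulrA expr2. Qed.

Lemma qv0 (F : comRingType) p (M : 'M[F]_p) : qv M 0 = 0.
Proof. by rewrite /qv !mul0mx mxE. Qed.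

Lemma polC (F : comRingType) p (M : 'M[F]_p) x y : pol M x y = pol M y x.
Proof. by rewrite /pol trsc linearD /= trmxK addrC. Qed.

Lemma pol_self (F : comRingType) p (M : 'M[F]_p) x : pol M x x = qv M x *+ 2.
Proof. by rewrite /pol /qv mulmxDr mulmxDl eD -trsc mulr2n. Qed.

Lemma polDl (F : comRingType) p (M : 'M[F]_p) x y z : pol M (x + y) z = pol M x z + pol M y z.
Proof. by rewrite /pol !mulmxDl eD. Qed.
Lemma polZl (F : comRingType) p (M : 'M[F]_p) c x z : pol M (c *: x) z = c * pol M x z.
Proof. by rewrite /pol -!scalemxAl mxE. Qed.
Lemma polDr (F : comRingType) p (M : 'M[F]_p) x y z : pol M z (x + y) = pol M z x + pol M z y.
Proof. by rewrite polC polDl !(polC _ z). Qed.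
Lemma polZr (F : comRingType) p (M : 'M[F]_p) c x z : pol M z (c *: x) = c * pol M z x.
Proof. by rewrite polC polZl polC. Qed.
Lemma polNl (F : comRingType) p (M : 'M[F]_p) x z : pol M (- x) z = - pol M x z.
Proof. by rewrite -scaleN1r polZl mulN1r. Qed.

Definition ev (F : pzRingType) p (i : 'I_p) : 'rV[F]_p := delta_mx 0 i.

Lemma pol_ev (F : comRingType) p (M : 'M[F]_p) i j :
  pol M (ev F i) (ev F j) = (M + M^T) i j.
Proof. by rewrite /pol /ev -rowE trmx_delta -colE !mxE. Qed.

Lemma qv_ev (F : comRingType) p (M : 'M[F]_p) i : qv M (ev F i) = M i i.
Proof. by rewrite /qv /ev -rowE trmx_delta -colE !mxE. Qed.

Lemma qv_mul (F : comRingType) p q (C : 'M[F]_(p, q)) (M : 'M[F]_q) y :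
  qv (C *m M *m C^T) y = qv M (y *m C).
Proof. by rewrite /qv trmx_mul !mulmxA. Qed.

Lemma pol_mul (F : comRingType) p q (C : 'M[F]_(p, q)) (M : 'M[F]_q) x y :
  pol (C *m M *m C^T) x y = pol M (x *m C) (y *m C).
Proof.
rewrite /pol; have -> : C *m M *m C^T + (C *m M *m C^T)^T = C *m (M + M^T) *m C^T.
  by rewrite !trmx_mul trmxK mulmxA -mulmxDl -mulmxDr.
by rewrite (trmx_mul y C) !mulmxA.
Qed.

Lemma qf_coef_pol (F : comRingType) p (M : 'M[F]_p) i j :
  qf_coef M i j = if i == j then qv M (ev F i) else pol M (ev F i) (ev F j).
Proof. by rewrite /qf_coef pol_ev qv_ev !mxE. Qed.

Lemma qf_coef_eq (F : comRingType) p (M N : 'M[F]_p) :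
  (forall u, qv M u = qv N u) -> forall i j, qf_coef M i j = qf_coef N i j.
Proof.
move=> h i j; rewrite !qf_coef_pol; case: eqP => _; first exact: h.
have e : forall K : 'M[F]_p, pol K (ev F i) (ev F j) =
   qv K (ev F i + ev F j) - qv K (ev F i) - qv K (ev F j).
  by move=> K; rewrite qvD sub3.
by rewrite !e !h.
Qed.

Lemma tri_sum (V : nmodType) p (g : 'I_p -> 'I_p -> V) :
  \sum_(i : 'I_p) \sum_(j : 'I_p) g i j =
  \sum_(i : 'I_p) \sum_(j : 'I_p | (i <= j)%N) (if i == j then g i i else g i j + g j i).
Proof.
have e1 : \sum_(i : 'I_p) \sum_(j : 'I_p) g i j =
   \sum_(i : 'I_p) \sum_(j : 'I_p | (i <= j)%N) g i j
   + \sum_(i : 'I_p) \sum_(j : 'I_p | (j < i)%N) g i j.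
  rewrite -big_split /=; apply: eq_bigr => i _.
  rewrite (bigID (fun j : 'I_p => (i <= j)%N)) /=; congr (_ + _).
  by apply: eq_bigl => j; rewrite -ltnNge.
have e2 : \sum_(i : 'I_p) \sum_(j : 'I_p | (j < i)%N) g i j
   = \sum_(i : 'I_p) \sum_(j : 'I_p | (i < j)%N) g j i.
  by rewrite (exchange_big_dep predT) //=.
have e3 : forall i : 'I_p,
   \sum_(j : 'I_p | (i <= j)%N) (if i == j then g i i else g i j + g j i)
   = \sum_(j : 'I_p | (i <= j)%N) g i j + \sum_(j : 'I_p | (i < j)%N) g j i.
  move=> i; rewrite (eq_bigr (fun j => g i j + (if i == j then 0 else g j i))); last first.
    by move=> j _; case: eqP => [->|]; rewrite ?addr0.
  rewrite big_split /=; congr (_ + _).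
  rewrite big_mkcond [RHS]big_mkcond; apply: eq_bigr => j _.
  rewrite ltn_neqAle; case: (i <= j)%N; case: eqP => //= [->|/eqP]; rewrite ?eqxx //.
  by move=> ne; rewrite andbT ifT.
rewrite e1 e2 -big_split /=; apply: eq_bigr => i _; by rewrite e3.
Qed.

Lemma qv_full (F : comRingType) p (M : 'M[F]_p) u :
  qv M u = \sum_(i : 'I_p) \sum_(j : 'I_p) M i j * (u 0 i * u 0 j).
Proof.
rewrite /qv mxE exchange_big /=; apply: eq_bigr => i _.
rewrite mxE big_distrl /=; apply: eq_bigr => j _.
by rewrite !mxE (mulrC (u 0 j)) -mulrA.
Qed.

Lemma qv_coef (F : comRingType) p (M : 'M[F]_p) u :
  qv M u = \sum_(i : 'I_p) \sum_(j : 'I_p | (i <= j)%N) qf_coef M i j * (u 0 i * u 0 j).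
Proof.
rewrite qv_full tri_sum; apply: eq_bigr => i _; apply: eq_bigr => j _.
rewrite /qf_coef; case: eqP => [->|_] //.
by rewrite mulrDl (mulrC (u 0 j)).
Qed.

Definition Ma (F : pzRingType) n (a : qvar n -> F) : 'M[F]_n :=
  \matrix_(i, j) (if insub (i, j) is Some v then a v else 0).

Lemma qf_coef_Ma (F : pzRingType) n (a : qvar n -> F) (v : qvar n) :
  qf_coef (Ma a) (sval v).1 (sval v).2 = a v.
Proof.
rewrite /qf_coef /Ma !mxE.
case: v => [[i j] /= hij].
have Hs : forall (k l : 'I_n) (h : (k <= l)%N), insub (k, l) = Some (exist _ (k, l) h : qvar n).
  by move=> k l h; rewrite insubT /=; congr Some; apply: val_inj.
case: (eqVneq i j) => [eij|neij].
  by subst j; rewrite (Hs _ _ hij).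
rewrite (Hs _ _ hij) insubF ?addr0 //=.
by apply/negbTE; rewrite -ltnNge ltn_neqAle hij andbT.
Qed.

Definition rep (F : comRingType) p (M : 'M[F]_p) r :=
  exists (B : 'M[F]_r) (L : 'M[F]_(p, r)), forall u, qv M u = qv B (u *m L).

Lemma qv_Ma_eq (F : comRingType) n (a : qvar n -> F) (N : 'M[F]_n) :
  (forall v : qvar n, qf_coef N (sval v).1 (sval v).2 = a v) ->
  forall u, qv (Ma a) u = qv N u.
Proof.
move=> h u; rewrite !qv_coef; apply: eq_bigr => i _; apply: eq_bigr => j hij.
by have := h (exist _ (i, j) hij); rewrite -(qf_coef_Ma a (exist _ (i, j) hij)) /= => ->.
Qed.

Lemma repr_rep (F : finFieldType) n (a : qvar n -> F) r :
  qf_repr a r <-> rep (Ma a) r.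
Proof.
split.
  case/existsP=> B /existsP [C /forallP h]; exists B, C^T => u.
  rewrite (qv_Ma_eq (N := C^T *m B *m C)); last by move=> v; apply/eqP; exact: h.
  by rewrite -{2}(trmxK C) qv_mul.
case=> B [L h]; apply/existsP; exists B; apply/existsP; exists L^T; apply/forallP => v.
rewrite trmxK -(qf_coef_Ma a v); apply/eqP; apply: qf_coef_eq => u.
by rewrite qv_mul h.
Qed.

Lemma rank_le (F : finFieldType) n (a : qvar n -> F) R :
  (qf_rank a <= R)%N <-> exists2 r, (r <= R)%N & rep (Ma a) r.
Proof.
rewrite /qf_rank; case: ex_minnP => m hm hmin; split.
  by move=> le; exists m => //; apply/repr_rep.
by case=> r le /repr_rep /hmin h; exact: leq_trans h le.
Qed.


Definition polm (F : comRingType) p (N : 'M[F]_p) := N + N^T.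

Definition Dv (F : comRingType) p (N : 'M[F]_p) : F :=
  \sum_(i : 'I_p) \sum_(j : 'I_p | (i <= j)%N) qf_coef N i j * \adj (polm N) i j.

Lemma polm_sym (F : comRingType) p (N : 'M[F]_p) : (polm N)^T = polm N.
Proof. by rewrite /polm linearD /= trmxK addrC. Qed.

Lemma adj_low (F : fieldType) p (A : 'M[F]_p) : (\rank A < p.-1)%N -> \adj A = 0.
Proof.
move=> lt; apply/matrixP => i j; rewrite !mxE /cofactor.
case: (eqVneq (\det (row' j (col' i A))) 0) => [->|nz]; first by rewrite mulr0.
have u : row' j (col' i A) \in unitmx by rewrite unitmxE unitfE.
have := mxrank_unit u => e.
have l1 : (\rank (row' j (col' i A)) <= \rank (col' i A))%N.
  by apply: mxrankS; exact: (rowsub_sub (lift j) (col' i A)).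
have l2 : (\rank (col' i A) <= \rank A)%N.
  rewrite -mxrank_tr tr_col' -[X in (_ <= X)%N]mxrank_tr.
  by apply: mxrankS; exact: (rowsub_sub (lift i) A^T).
by move: (leq_trans l1 l2); rewrite e leqNgt lt.
Qed.

Lemma vanish_core (F : fieldType) p (N : 'M[F]_p) (w : 'rV[F]_p) :
  w != 0 -> w *m polm N = 0 -> qv N w = 0 -> Dv N = 0.
Proof.
move=> wnz wA qw.
set A := polm N.
case: (ltnP (\rank A) p.-1) => [lt|ge].
  by rewrite /Dv (adj_low lt) big1 // => i _; rewrite big1 // => j _; rewrite mxE mulr0.
have dA : \det A = 0 by apply/eqP/det0P; exists w.
have aA : \adj A *m A = 0 by rewrite mul_adj_mx dA; apply/matrixP => i j; rewrite !mxE mul0rn.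
have wk : (w <= kermx A)%MS by apply/sub_kermxP.
have rw : \rank w = 1%N by rewrite rank_rV wnz.
have kw : (kermx A <= w)%MS.
  have e := (mxrank_leqif_eq wk).2.
  have : (w == kermx A)%MS.
    rewrite -e rw eqn_leq; apply/andP; split.
      by rewrite -rw; apply: mxrankS.
    rewrite mxrank_ker leq_subLR addnC; apply: leq_trans (leq_add (leqnn 1) ge).
    by case: (p).
  by case/andP.
have ri : forall i, exists s, row i (\adj A) = s *: w.
  move=> i; apply/sub_rVP; apply: submx_trans kw.
  by apply/sub_kermxP; rewrite -row_mul aA row0.
have [j0 wj0] : exists j0, w 0 j0 != 0.
  have : [exists j, w 0 j != 0].
    apply: contraR wnz => /existsPn h.
    by apply/eqP/rowP => j; rewrite mxE; apply/eqP; move: (h j); rewrite negbK.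
  by case/existsP=> j hj; exists j.
have rent : forall i j, \adj A i j * w 0 j0 = \adj A i j0 * w 0 j.
  move=> i j; case: (ri i) => s hs.
  have ej : forall k, \adj A i k = s * w 0 k.
    by move=> k; have := congr1 (fun M : 'rV[F]_p => M 0 k) hs; rewrite !mxE.
  by rewrite !ej mulrAC.
have sym : forall i j, \adj A i j = \adj A j i.
  move=> i j; have := congr1 (fun M : 'M[F]_p => M j i) (trmx_adj A).
  by rewrite polm_sym mxE => <-.
set c := \adj A j0 j0 / (w 0 j0 ^+ 2).
have adjE : forall i j, \adj A i j = c * (w 0 i * w 0 j).
  move=> i j; apply: (mulIf (expf_neq0 2 wj0)).
  rewrite mulrAC /c divfK ?expf_neq0 //.
  by rewrite expr2 mulrA rent mulrAC sym rent -mulrA.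
rewrite /Dv (eq_bigr (fun i : 'I_p => c * \sum_(j : 'I_p | (i <= j)%N) qf_coef N i j * (w 0 i * w 0 j))).
  by rewrite -mulr_sumr -qv_coef qw mulr0.
move=> i _; rewrite mulr_sumr; apply: eq_bigr => j _.
by rewrite adjE mulrCA.
Qed.


Definition pt (i : nat) : nat := if odd i then i.-1 else i.+1.

Lemma ptK i : pt (pt i) = i.
Proof.
rewrite /pt; case: i => [|i] //=; case oi: (odd i) => /=.
  by rewrite oi.
by rewrite /= oi.
Qed.

Lemma pt_lt k i : (i < k.*2)%N -> (pt i < k.*2)%N.
Proof.
rewrite /pt; case oi: (odd i).
  by move=> h; apply: leq_ltn_trans h; exact: leq_pred.
move=> h; rewrite ltn_neqAle h andbT; apply/eqP => e.
by move: (congr1 odd e); rewrite /= oi odd_double.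
Qed.

Definition J (F : pzRingType) k : 'M[F]_(k.*2.+1) :=
  \matrix_(i, j) ((i < k.*2)%N && (j == pt i :> nat))%:R.

Lemma J_sym k (i j : 'I_(k.*2.+1)) :
  ((i < k.*2)%N && (j == pt i :> nat)) = ((j < k.*2)%N && (i == pt j :> nat)).
Proof.
apply/andP/andP => [[h /eqP e]|[h /eqP e]]; split.
- by rewrite e pt_lt.
- by rewrite e ptK.
- by rewrite e pt_lt.
- by rewrite e ptK.
Qed.

Definition ptord k (i : 'I_(k.*2)) : 'I_(k.*2) := Ordinal (pt_lt (ltn_ord i)).

Lemma ptord_inj k : injective (@ptord k).
Proof. by move=> i j /(congr1 val) /= /(congr1 pt); rewrite !ptK => /val_inj. Qed.

Lemma sep_core (F : fieldType) k (N : 'M[F]_(k.*2.+1)) :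
  polm N = J F k -> N ord_max ord_max != 0 -> Dv N != 0.
Proof.
move=> hJ nz.
rewrite /Dv hJ.
set A := \adj (J F k).
have eA : \adj (J F k) = A by [].
clearbody A.
have dJ : \det (J F k) = 0.
  apply/eqP/det0P; exists (delta_mx 0 ord_max).
    by apply/eqP => /matrixP /(_ 0 ord_max); rewrite !mxE !eqxx /= => /eqP; rewrite oner_eq0.
  by rewrite -rowE; apply/rowP => j; rewrite !mxE /= ltnn.
have aJ : A *m J F k = 0.
  by rewrite -eA mul_adj_mx dJ; apply/matrixP => i j; rewrite !mxE mul0rn.
have A0 : forall i j : 'I_(k.*2.+1), (j < k.*2)%N -> A i j = 0.
  move=> i j hj.
  have := congr1 (fun M : 'M[F]_(k.*2.+1) => M i (inord (pt j))) aJ.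
  rewrite !mxE => <-.
  have hpj : (pt j < k.*2.+1)%N := ltnW (pt_lt hj).
  rewrite (bigD1 j) //= big1 ?addr0.
    by rewrite mxE inordK // hj eqxx mulr1.
  move=> l hl; rewrite mxE inordK //.
  case: eqP => [e|]; last by rewrite andbF mulr0.
  by move: hl; rewrite -(inj_eq val_inj) /= -(ptK l) -e ptK eqxx.
have A0' : forall i j : 'I_(k.*2.+1), (i < k.*2)%N -> A i j = 0.
  move=> i j hi; have := congr1 (fun M : 'M[F]_(k.*2.+1) => M j i) (trmx_adj (J F k)).
  rewrite eA mxE => ->.
  have -> : (J F k)^T = J F k.
    by apply/matrixP => a b; rewrite !mxE J_sym.
  by rewrite eA A0.
have Alast : A ord_max ord_max != 0.
  rewrite -eA mxE /cofactor.
  have -> : row' ord_max (col' ord_max (J F k)) = perm_mx (perm (@ptord_inj k)).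
    apply/matrixP => a b; rewrite !mxE permE /= /bump.
    have ha : (k.*2 <= a)%N = false by rewrite leqNgt (ltn_ord a).
    have hb : (k.*2 <= b)%N = false by rewrite leqNgt (ltn_ord b).
    rewrite ha hb !add0n (ltn_ord a) /=.
    by rewrite eq_sym -(inj_eq val_inj).
  by rewrite det_perm mulf_neq0 // signr_eq0.
rewrite (bigD1 ord_max) //= [X in _ + X]big1 ?addr0; last first.
  move=> i hi; apply: big1 => j _; rewrite A0' ?mulr0 //.
  have := ltn_ord i; rewrite ltnS leq_eqVlt => /orP [/eqP e|] //.
  by move: hi; rewrite -(inj_eq val_inj) /= e eqxx.
rewrite (bigD1 ord_max) //= [X in _ + X]big1 ?addr0; last first.
  move=> j /andP [h1 h2]; exfalso; move: h2; apply/negP/negPn.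
  by apply/eqP/val_inj => /=; apply/eqP; rewrite eqn_leq h1 -ltnS ltn_ord.
by rewrite /qf_coef eqxx mulf_neq0.
Qed.


Lemma sqrt_ex (F : finFieldType) : (2 \in [pchar F])%N ->
  exists g : F -> F, forall x, g x ^+ 2 = x.
Proof.
move=> charF.
have inj : injective (fun x : F => x ^+ 2).
  move=> x y /= e; apply/eqP; rewrite -subr_eq0.
  have : (x - y) ^+ 2 == 0.
    by rewrite -(pFrobenius_autE charF) rmorphB /= !pFrobenius_autE e subrr.
  by rewrite expf_eq0.
by case: (injF_bij inj) => g _ gK; exists g.
Qed.

Lemma rep_sq (F : finFieldType) (charF : (2 \in [pchar F])%N) n (M : 'M[F]_n) k :
  polm M = 0 -> rep M k.+1.
Proof.
move=> hA; case: (sqrt_ex charF) => g hg.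
pose L : 'M[F]_(n, k.+1) := \matrix_(i, c) (if c == 0 then g (M i i) else 0).
pose B : 'M[F]_(k.+1) := \matrix_(c, d) ((c == 0) && (d == 0))%:R.
exists B, L => u.
have qB : forall x : 'rV[F]_(k.+1), qv B x = x 0 0 ^+ 2.
  move=> x; rewrite qv_full (bigD1 0) //= [X in _ + X]big1 ?addr0; last first.
    by move=> i /negbTE hi; apply: big1 => j _; rewrite mxE hi mul0r.
  rewrite (bigD1 0) //= [X in _ + X]big1 ?addr0; last first.
    by move=> j /negbTE hj; rewrite mxE hj andbF mul0r.
  by rewrite mxE mul1r expr2.
rewrite qB mxE.
rewrite -(pFrobenius_autE charF) rmorph_sum /=.
rewrite qv_coef; apply: eq_bigr => i _.
rewrite (bigD1 i) //= [X in _ + X]big1 ?addr0; last first.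
  move=> j /andP [hij nij]; rewrite /qf_coef eq_sym (negbTE nij).
  have := congr1 (fun X : 'M[F]_n => X i j) hA; rewrite !mxE => ->.
  by rewrite mul0r.
by rewrite /qf_coef eqxx mxE eqxx pFrobenius_autE exprMn hg mulrC expr2.
Qed.

Lemma polm_mul (F : comRingType) p q (C : 'M[F]_(p, q)) (M : 'M[F]_q) :
  polm (C *m M *m C^T) = C *m polm M *m C^T.
Proof. by rewrite /polm !trmx_mul trmxK mulmxA -mulmxDl -mulmxDr. Qed.

Lemma qv_blk (F : comRingType) p1 p2 (P11 : 'M[F]_p1) P12 P21 (P22 : 'M[F]_p2) a b :
  qv (block_mx P11 P12 P21 P22) (row_mx a b) =
  qv P11 a + (a *m P12 *m b^T) 0 0 + (b *m P21 *m a^T) 0 0 + qv P22 b.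
Proof.
rewrite /qv mul_row_block tr_row_mx mul_row_col !mulmxDl !eD.
by rewrite addrACA !addrA.
Qed.

Lemma qv11 (F : comRingType) (c : F) (a : 'rV[F]_1) : qv c%:M a = c * a 0 0 ^+ 2.
Proof.
rewrite /qv mul_mx_scalar -scalemxAl mxE (mx11_scalar (a *m a^T)) mxE eqxx mulr1n.
by rewrite mxE big_ord1 mxE expr2.
Qed.

Lemma ptS2 x : pt x.+2 = (pt x).+2.
Proof. by rewrite /pt /=; case: x => [|x] //=; case: (odd x). Qed.

Lemma J_block (F : pzRingType) k :
  J F k.+1 = block_mx (\matrix_(i, j) (i != j)%:R : 'M[F]_2) 0 0 (J F k)
  :> 'M[F]_(2 + k.*2.+1).
Proof.
apply/matrixP => a b.
rewrite -[a](splitK) -[b](splitK).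
case: (split a) => a'; case: (split b) => b'.
- rewrite block_mxEul !mxE /=.
  by case: a' => [[|[|]]] //; case: b' => [[|[|]]].
- rewrite block_mxEur !mxE /=; case: a' => [[|[|]]] //= _.
- rewrite block_mxEdl !mxE /= ptS2; case: b' => [[|[|]]] //= _; by case: (_ < _)%N.
- by rewrite block_mxEdr !mxE /= ptS2 !eqSS.
Qed.

Lemma entG (F : comRingType) p q (C : 'M[F]_(p, q)) (N : 'M[F]_q) a b :
  (C *m N *m C^T) a b = (row a C *m N *m (row b C)^T) 0 0.
Proof.
rewrite !mxE; apply: eq_bigr => l _; rewrite !mxE; congr (_ * _).
by apply: eq_bigr => m _; rewrite !mxE.
Qed.

Lemma ent_pol (F : comRingType) p q (C : 'M[F]_(p, q)) (M : 'M[F]_q) a b :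
  polm (C *m M *m C^T) a b = pol M (row a C) (row b C).
Proof. by rewrite polm_mul entG. Qed.

Lemma ent_qv (F : comRingType) p q (C : 'M[F]_(p, q)) (M : 'M[F]_q) a :
  (C *m M *m C^T) a a = qv M (row a C).
Proof. by rewrite entG. Qed.


Lemma Gbase (F : finFieldType) (charF : (2 \in [pchar F])%N) n (M : 'M[F]_n) :
  (exists C : 'M[F]_(0.*2.+1, n),
      polm (C *m M *m C^T) = J F 0 /\ (C *m M *m C^T) ord_max ord_max != 0)
  \/ rep M 0.*2.
Proof.
case: (boolP [exists u : 'rV[F]_n, qv M u != 0]) => [/existsP [u hu]|/existsPn h].
  left; exists u; split.
    apply/matrixP => i j; rewrite !ord1 !mxE /=.
    by rewrite addrr_pchar2.
  by have -> : (ord_max : 'I_1) = 0 by apply: val_inj.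
right; exists 0, 0 => u.
move: (h u); rewrite negbK => /eqP ->.
by rewrite /qv mulmx0 mul0mx mxE.
Qed.

Lemma ev_ent (F : comRingType) p (x : 'rV[F]_p) b : (x *m (ev F b)^T) 0 0 = x 0 b.
Proof. by rewrite /ev trmx_delta -colE mxE. Qed.

Lemma Gstep (F : finFieldType) (charF : (2 \in [pchar F])%N) n k
  (IH : forall M : 'M[F]_n,
    (exists C : 'M[F]_(k.*2.+1, n),
      polm (C *m M *m C^T) = J F k /\ (C *m M *m C^T) ord_max ord_max != 0)
    \/ rep M k.*2)
  (M : 'M[F]_n) :
  (exists C : 'M[F]_(k.+1.*2.+1, n),
      polm (C *m M *m C^T) = J F k.+1 /\ (C *m M *m C^T) ord_max ord_max != 0)
  \/ rep M k.+1.*2.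
Proof.
set A := polm M.
case: (eqVneq A 0) => [A0|Anz].
  by right; apply: (rep_sq charF).
have : [exists i, [exists j, A i j != 0]].
  case: (boolP [exists i, [exists j, A i j != 0]]) => // /existsPn h.
  exfalso; move/eqP: Anz; apply; apply/matrixP => i j.
  by move/existsPn: (h i) => /(_ j); rewrite negbK => /eqP ->; rewrite mxE.
case/existsP => i /existsP [j hij].
set e := (A i j)^-1 *: ev F i.
set f := ev F j.
have hef : pol M e f = 1 by rewrite polZl pol_ev mulVf.
have hfe : pol M f e = 1 by rewrite polC.
clearbody e f.
have h2 : forall x, pol M x x = 0 by move=> x; rewrite pol_self mulrn_pchar.
set P : 'M[F]_n := 1%:M - (A *m f^T) *m e - (A *m e^T) *m f.
have huP : forall u, u *m P = u - pol M u f *: e - pol M u e *: f.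
  move=> u; rewrite /P !mulmxBr mulmx1 !mulmxA.
  rewrite (mx11_scalar (u *m A *m f^T)) (mx11_scalar (u *m A *m e^T)).
  by rewrite !mul_scalar_mx.
have polPe : forall u, pol M (u *m P) e = 0.
  move=> u; rewrite huP !polDl !polNl !polZl h2 hfe.
  by rewrite mulr0 subr0 mulr1 subrr.
have polPf : forall u, pol M (u *m P) f = 0.
  move=> u; rewrite huP !polDl !polNl !polZl h2 hef.
  by rewrite mulr0 subr0 mulr1 subrr.
set M2 := P *m M *m P^T.
case: (IH M2) => [[C' [hJ hl]] | [B' [L' hr]]].
  pose X : 'M[F]_(2, n) := \matrix_(a, b) (if a == 0 :> nat then e 0 b else f 0 b).
  have rowX : forall a : 'I_2, row a X = if a == 0 :> nat then e else f.
    by move=> a; apply/rowP => b; rewrite !mxE; case: ifP.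
  pose C : 'M[F]_(2 + k.*2.+1, n) := col_mx X (C' *m P).
  left; exists C; split.
    change (polm (C *m M *m C^T) = J F k.+1 :> 'M_(2 + k.*2.+1)); rewrite J_block.
    apply/matrixP => a b; rewrite ent_pol -[a]splitK -[b]splitK.
    case: (split a) => a'; case: (split b) => b'.
    - rewrite !rowKu !rowX block_mxEul mxE.
      by case: a' => [[|[|]]] //= ha; case: b' => [[|[|]]] //= hb; rewrite ?h2.
    - rewrite rowKu rowKd rowX row_mul block_mxEur mxE polC.
      by case: ifP => _; rewrite ?polPe ?polPf.
    - rewrite rowKu rowKd rowX row_mul block_mxEdl mxE.
      by case: ifP => _; rewrite ?polPe ?polPf.
    - rewrite !rowKd !row_mul block_mxEdr -pol_mul -ent_pol hJ.
      done.
  have -> : (ord_max : 'I_(k.+1.*2.+1)) = rshift 2 (ord_max : 'I_(k.*2.+1)) by apply: val_inj.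
  rewrite ent_qv; change (qv M (row (rshift 2 ord_max) (col_mx X (C' *m P) : 'M_(2 + k.*2.+1, n))) != 0).
  by rewrite rowKd row_mul -qv_mul -ent_qv.
right.
pose L1 : 'M[F]_(n, 1 + 1) := row_mx (A *m f^T) (A *m e^T).
pose B1 : 'M[F]_(1 + 1) := block_mx (qv M e)%:M 1 0 (qv M f)%:M.
exists (block_mx B1 0 0 B'), (row_mx L1 L') => u.
change (qv M u = @qv F (1 + 1 + k.*2) (block_mx B1 0 0 B') (u *m row_mx L1 L')).
rewrite mul_mx_row qv_blk !mulmx0 !mul0mx !mxE !addr0.
rewrite -hr /M2 qv_mul /L1 mul_mx_row qv_blk !qv11 mulmx1 !mulmx0 !mul0mx [(0 : 'M_(1,1)) 0 0]mxE addr0.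
have m11 : forall X Y : 'M[F]_1, (X *m Y^T) 0 0 = X 0 0 * Y 0 0.
  by move=> X Y; rewrite mxE big_ord1 mxE.
have pu : forall x y, (x *m (A *m y^T)) 0 0 = pol M x y by move=> x y; rewrite mulmxA.
rewrite m11 !pu.
have du : u = u *m P + (pol M u f *: e + pol M u e *: f).
  by rewrite huP -[u - _ - _]addrA -opprD subrK.
rewrite {1}du qvD polDr !polZr polPe polPf !mulr0 addr0 qvD !qvZ polZl polZr hef mulr1.
rewrite addr0 addrC; congr (_ + _).
by rewrite (mulrC (qv M e)) (mulrC (qv M f)) addrAC.
Qed.

Lemma Gk (F : finFieldType) (charF : (2 \in [pchar F])%N) n k (M : 'M[F]_n) :
  (exists C : 'M[F]_(k.*2.+1, n),
      polm (C *m M *m C^T) = J F k /\ (C *m M *m C^T) ord_max ord_max != 0)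
  \/ rep M k.*2.
Proof.
elim: k M => [|k IH] M; first exact: Gbase.
exact: Gstep.
Qed.


Lemma islin_add (F : comRingType) (V : finType) (f g : (V -> F) -> F) :
  islin f -> islin g -> islin (fun a => f a + g a).
Proof.
move=> hf hg a /=; rewrite [f a]hf [g a]hg -big_split /=; apply: eq_bigr => v _.
by rewrite mulrDl.
Qed.

Lemma islin_scale (F : comRingType) (V : finType) (c : F) (f : (V -> F) -> F) :
  islin f -> islin (fun a => c * f a).
Proof.
move=> hf a /=; rewrite [f a]hf mulr_sumr; apply: eq_bigr => v _.
by rewrite mulrA.
Qed.

Lemma islin_sum (F : comRingType) (V : finType) (I : finType) (G : I -> (V -> F) -> F) :
  (forall i, islin (G i)) -> islin (fun a => \sum_(i : I) G i a).
Proof.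
move=> hG a; rewrite (eq_bigr (fun i => \sum_(v : V) G i (dlt F v) * a v)); last first.
  by move=> i _; rewrite -hG.
rewrite exchange_big /=; apply: eq_bigr => v _.
by rewrite mulr_suml.
Qed.

Lemma islin_0 (F : comRingType) (V : finType) : islin (fun _ : V -> F => 0).
Proof. by move=> a; rewrite big1 // => v _; rewrite mul0r. Qed.

Lemma islin_coord (F : comRingType) (V : finType) (v : V) : islin (fun a : V -> F => a v).
Proof.
move=> a; rewrite (bigD1 v) //= big1 ?addr0; first by rewrite /dlt eqxx mul1r.
by move=> w hw; rewrite /dlt eq_sym (negbTE hw) mul0r.
Qed.

Lemma islin_ext (F : comRingType) (V : finType) (f g : (V -> F) -> F) :
  (forall a, f a = g a) -> islin f -> islin g.
Proof. by move=> e hf a; rewrite -e hf; apply: eq_bigr => v _; rewrite e. Qed.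

Definition islinM (F : comRingType) (V : finType) p q (Mf : (V -> F) -> 'M[F]_(p, q)) :=
  forall x y, islin (fun a => Mf a x y).

Lemma islinM_mul (F : comRingType) (V : finType) p q r s (C : 'M[F]_(p, q))
  (Mf : (V -> F) -> 'M[F]_(q, r)) (D : 'M[F]_(r, s)) :
  islinM Mf -> islinM (fun a => C *m Mf a *m D).
Proof.
move=> h x y.
apply: (islin_ext (f := fun a => \sum_(l : 'I_r) D l y * \sum_(t : 'I_q) C x t * Mf a t l)).
  by move=> a; rewrite !mxE; apply: eq_bigr => l _; rewrite mxE mulrC.
apply: islin_sum => l; apply: islin_scale; apply: islin_sum => t; exact: islin_scale.
Qed.

Lemma islinM_polm (F : comRingType) (V : finType) p (Mf : (V -> F) -> 'M[F]_p) :
  islinM Mf -> islinM (fun a => polm (Mf a)).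
Proof.
move=> h x y; apply: (islin_ext (f := fun a => Mf a x y + Mf a y x)).
  by move=> a; rewrite !mxE.
exact: islin_add.
Qed.

Lemma islin_qf (F : comRingType) (V : finType) p (Mf : (V -> F) -> 'M[F]_p) x y :
  islinM Mf -> islin (fun a => qf_coef (Mf a) x y).
Proof.
move=> h; rewrite /qf_coef; case: eqP => _; first exact: h.
exact: islin_add.
Qed.

Lemma islinM_Ma (F : comRingType) n : islinM (fun a : qvar n -> F => Ma a).
Proof.
move=> x y; rewrite /Ma.
apply: (islin_ext (f := fun a => if insub (x, y) is Some v then a v else 0)).
  by move=> a; rewrite mxE.
case: insub => [v|]; [exact: islin_coord | exact: islin_0].
Qed.

Lemma IsH_Dv (F : comRingType) (V : finType) k (Mf : (V -> F) -> 'M[F]_(k.+1)) :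
  islinM Mf -> IsH k.+1 (fun a => Dv (Mf a)).
Proof.
move=> hM; rewrite /Dv.
apply: IsH_sum => i _; apply: IsH_sum => j _.
pose Y a : 'M[F]_k := row' j (col' i (polm (Mf a))).
have hY : islinM Y.
  move=> x y; apply: (islin_ext (f := fun a => polm (Mf a) (lift j x) (lift i y))).
    by move=> a; rewrite /Y !mxE.
  exact: islinM_polm.
apply: (IsH_ext (f := fun a => \sum_(s : 'S_k) ((-1) ^+ (j + i) * (-1) ^+ s) *
    (qf_coef (Mf a) i j * \prod_(t < k) Y a t (s t)))).
  move=> a; rewrite [\adj _ i j]mxE /cofactor /determinant -/(Y a).
  rewrite mulr_sumr mulr_sumr; apply: eq_bigr => s _.
  by rewrite mulrCA -mulrA.
apply: IsH_sum => s _; apply: IsHZ.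
pose f (t : 'I_k.+1) : (V -> F) -> F :=
  if unlift ord0 t is Some t' then (fun a => Y a t' (s t')) else (fun a => qf_coef (Mf a) i j).
apply: (IsH_ext (f := fun a => \prod_(t < k.+1) f t a)).
  move=> a; rewrite big_ord_recl /f unlift_none; congr (_ * _).
  by apply: eq_bigr => t _; rewrite liftK.
apply: IsH_prodlin => t; rewrite /f; case: unlift => [t'|].
  exact: hY.
exact: islin_qf.
Qed.


Lemma vanish (F : fieldType) n m r (M : 'M[F]_n) (C : 'M[F]_(m, n)) :
  (r < m)%N -> rep M r -> Dv (C *m M *m C^T) = 0.
Proof.
move=> ltrm [B [L hBL]].
set N := C *m M *m C^T.
set K := C *m L.
have hN : forall y, qv N y = qv B (y *m K).
  by move=> y; rewrite /N qv_mul hBL mulmxA.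
have kz : kermx K != 0.
  rewrite -mxrank_eq0 mxrank_ker subn_eq0 -ltnNge.
  by apply: leq_ltn_trans (rank_leq_col K) ltrm.
have [i wi] : exists i, row i (kermx K) != 0.
  case: (boolP [exists i, row i (kermx K) != 0]) => [/existsP [i hi]|/existsPn h].
    by exists i.
  exfalso; move/eqP: kz; apply; apply/row_matrixP => i; rewrite row0.
  by move: (h i); rewrite negbK => /eqP.
set w := row i (kermx K).
have wK : w *m K = 0 by apply/sub_kermxP; exact: row_sub.
have inv : forall y, qv N (y + w) = qv N y by move=> y; rewrite !hN mulmxDl wK addr0.
have qw : qv N w = 0 by rewrite -(add0r w) inv qv0.
apply: (@vanish_core _ _ N w) => //.
apply/rowP => b; rewrite -(ev_ent (w *m polm N) b) [RHS]mxE.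
change (pol N w (ev F b) = 0).
move: (qvD N w (ev F b)); rewrite addrC inv qw add0r.
by move/(congr1 (fun x => x - qv N (ev F b))); rewrite subrr addrC addKr.
Qed.

Lemma exS (T : eqType) (H : Type) (G : T -> H -> Prop) (l : seq T) :
  (forall C, exists p, G C p) ->
  exists S : seq H, (forall p, List.In p S -> exists C, G C p) /\
     (forall C, C \in l -> exists p, List.In p S /\ G C p).
Proof.
move=> ex; elim: l => [|x l [S [h1 h2]]].
  by exists nil; split => // C.
case: (ex x) => p hp; exists (p :: S); split.
  by move=> q /= [<-|/h1 //]; exists x.
move=> C; rewrite inE => /orP [/eqP ->|/h2 [q [iq gq]]].
  by exists p; split => //; left.
by exists q; split => //; right.
Qed.

Unset Implicit Arguments.

Theorem lemma1 (F : finFieldType) (n R : nat)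
    (charF : (2 \in [pchar F])%N) (hn : (0 < n)%N) (hR : ~~ odd R) :
  exists S : seq (hpoly F (qvar n) R.+1),
    forall a : qvar n -> F,
      (forall p, List.In p S -> heval p a = 0) <-> (qf_rank a <= R)%N.
Proof.
have [k eR] : exists k, R = k.*2.
  by exists R./2; rewrite -[LHS]odd_double_half (negbTE hR) add0n.
subst R.
pose G (C : 'M[F]_(k.*2.+1, n)) (p : hpoly F (qvar n) k.*2.+1) :=
  forall a, heval p a = Dv (C *m Ma a *m C^T).
have ex : forall C, exists p, G C p.
  move=> C; case: (IsH_Dv (@islinM_mul F (qvar n) _ _ _ _ C (fun a => Ma a) C^T (@islinM_Ma F n))) => p hp.
  by exists p.
case: (exS (enum 'M[F]_(k.*2.+1, n)) ex) => S [hS1 hS2].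
exists S => a; split.
  move=> hv; case: (Gk charF k (Ma a)) => [[C [hJ hl]]|hr].
    exfalso; case: (hS2 C); first by rewrite mem_enum.
    move=> p [inS gp]; move: (hv p inS); rewrite gp => /eqP.
    by apply/negP; exact: sep_core.
  by apply/rank_le; exists k.*2.
move=> /rank_le [r hr hrep] p inS; case: (hS1 p inS) => C hC; rewrite hC.
by apply: (vanish (r := r)) => //; rewrite ltnS.
Qed.
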